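(* Let $q$ be a prime power. A rank-$r$ matroid $M$ in $\mathcal{M}_q$ is round if and only if $M\cong PG(r-1,q)$.
   Context: A matroid is round if it has no two disjoint cocircuits. For matroids $M_1,M_2$ whose ground sets meet in a set $T$ that is a modular flat of $M_1$ with $M_1|T=M_2|T=N$, the generalized parallel connection $P_N(M_1,M_2)$ is the matroid on $E(M_1)\cup E(M_2)$ whose flats are the sets $Z$ with $Z\cap E(M_i)$ a flat of $M_i$ for $i=1,2$ (if $T=\emptyset$ this is $M_1\oplus M_2$). $\mathcal{M}_q$ is the class of matroids that can be built from projective geometries over $GF(q)$ by a sequence of generalized parallel connections across projective geometries over $GF(q)$. *)

(* Defs.v *)
From HB Require Import structures.
From mathcomp Require Import all_boot all_order all_algebra.
Set Implicit Arguments. Unset Strict Implicit. Unset Printing Implicit Defensive.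
Import GRing.Theory.

Record matroid (T : finType) := Matroid {
  ground : {set T};
  indep : {set T} -> bool;
  indep_sub : forall X : {set T}, indep X -> X \subset ground;
  indep0 : indep set0;
  indep_down : forall X Y : {set T}, Y \subset X -> indep X -> indep Y;
  indep_aug : forall X Y : {set T}, indep X -> indep Y -> #|X| < #|Y| ->
                exists2 y, y \in Y :\: X & indep (y |: X)
}.

Section MatroidDefs.
Variables (T : finType) (M : matroid T).

Definition rank (X : {set T}) : nat :=
  \max_(Y : {set T} | (Y \subset X) && indep M Y) #|Y|.

Definition flat_in (S F : {set T}) : Prop :=
  F \subset S /\ forall x : T, x \in S :\: F -> rank F < rank (x |: F).

Definition modular_in (S F : {set T}) : Prop :=
  flat_in S F /\ forall G : {set T}, flat_in S G ->
    rank F + rank G = rank (F :&: G) + rank (F :|: G).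

Definition basis (B : {set T}) : Prop :=
  indep M B /\ forall Y : {set T}, indep M Y -> B \subset Y -> Y = B.

Definition coindep (X : {set T}) : Prop :=
  X \subset ground M /\ exists B, basis B /\ [disjoint X & B].

Definition cocircuit (C : {set T}) : Prop :=
  C \subset ground M /\ ~ coindep C /\ forall Y : {set T}, Y \proper C -> coindep Y.

Definition round : Prop :=
  forall C D : {set T}, cocircuit C -> cocircuit D -> ~ [disjoint C & D].

End MatroidDefs.

(* M|S is isomorphic to PG(n-1, F): a bijection from S onto the points
   (1-dimensional subspaces) of F^n, under which a set of points is independent
   iff the subspaces it spans has dimension equal to the number of points. *)
Definition PG_iso (F : finFieldType) (T : finType) (M : matroid T)
    (S : {set T}) (n : nat) : Prop :=
  exists f : T -> {vspace 'rV[F]_n},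
    [/\ {in S &, injective f},
        (forall x : T, x \in S -> \dim (f x) = 1%N),
        (forall V : {vspace 'rV[F]_n}, \dim V = 1%N -> exists2 x, x \in S & f x = V) &
        (forall X : {set T}, X \subset S ->
           (indep M X <-> \dim (\sum_(x in X) f x)%VS = #|X|))].

(* inMq F M S : the restriction M|S belongs to the class M_q, q = #|F|:
   either it is (isomorphic to) a projective geometry over F, or it is the
   generalized parallel connection of M|S1 and M|S2 (both in M_q) across
   T' = S1 ∩ S2, where T' is a modular flat of M|S1 and M|T' is a projective
   geometry over F.  P_N(M|S1, M|S2) = M|(S1 ∪ S2) is expressed through its
   defining description of flats. *)
Inductive inMq (F : finFieldType) (T : finType) (M : matroid T) : {set T} -> Prop :=
| Mq_PG : forall (S : {set T}) (n : nat), S \subset ground M -> PG_iso F M S n -> inMq F M S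
| Mq_gpc : forall (S1 S2 : {set T}) (n : nat),
    inMq F M S1 -> inMq F M S2 ->
    modular_in M S1 (S1 :&: S2) ->
    PG_iso F M (S1 :&: S2) n ->
    (forall Z : {set T}, Z \subset S1 :|: S2 ->
       (flat_in M (S1 :|: S2) Z <->
        flat_in M S1 (Z :&: S1) /\ flat_in M S2 (Z :&: S2))) ->
    inMq F M (S1 :|: S2).

(* Main.v *)
Require Import Defs.
From mathcomp Require Import all_boot all_order all_algebra all_field.
From Stdlib Require Import Classical.
Set Implicit Arguments. Unset Strict Implicit. Unset Printing Implicit Defensive.
Import GRing.Theory.


Lemma rank_ge (T : finType) (M : matroid T) (X I : {set T}) :
  I \subset X -> indep M I -> #|I| <= rank M X.
Proof. move=> sIX iI; rewrite /rank; apply: (@leq_bigmax_cond _ _ _ I); by rewrite sIX iI. Qed.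

Lemma rank_wit (T : finType) (M : matroid T) (X : {set T}) :
  exists I : {set T}, [/\ I \subset X, indep M I & #|I| = rank M X].
Proof.
rewrite /rank.
have : 0 < #|[pred Y : {set T} | (Y \subset X) && indep M Y]|.
  apply/card_gt0P; exists set0; by rewrite inE sub0set indep0.
move/(eq_bigmax_cond (fun Y : {set T} => #|Y|)) => [I]; rewrite inE => /andP[h1 h2] ->.
by exists I.
Qed.

Lemma rank_mono (T : finType) (M : matroid T) (X Y : {set T}) :
  X \subset Y -> rank M X <= rank M Y.
Proof.
move=> sXY; have [I [sIX iI <-]] := rank_wit M X.
apply: rank_ge => //; exact: subset_trans sXY.
Qed.

Lemma rank_extend (T : finType) (M : matroid T) (Z I : {set T}) :
  I \subset Z -> indep M I ->
  exists J : {set T}, [/\ I \subset J, J \subset Z, indep M J & #|J| = rank M Z].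
Proof.
move Hk: (rank M Z - #|I|) => k.
elim: k I Hk => [|k IH] I Hk sIZ iI.
  exists I; split => //; apply/eqP; rewrite eqn_leq rank_ge //=.
  by rewrite -subn_eq0 Hk.
have [K [sKZ iK eK]] := rank_wit M Z.
have lt : #|I| < #|K| by rewrite eK -subn_gt0 Hk.
have [y yKI iyI] := indep_aug iI iK lt.
move: yKI; rewrite inE => /andP[yI yK].
have [J [h1 h2 h3 h4]] : exists J : {set T}, [/\ y |: I \subset J, J \subset Z, indep M J & #|J| = rank M Z].
  apply: IH => //.
    by rewrite cardsU1 yI add1n subnS Hk.
  by rewrite subUset sub1set (subsetP sKZ) // sIZ.
exists J; split => //; apply: subset_trans h1; exact: subsetUr.
Qed.

Lemma rank_closure (T : finType) (M : matroid T) (Z' Z : {set T}) (z : T) :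
  Z' \subset Z -> rank M (z |: Z') = rank M Z' -> rank M (z |: Z) = rank M Z.
Proof.
move=> sZ eq'.
apply/eqP; rewrite eqn_leq (rank_mono M (subsetUr _ _)) andbT leqNgt; apply/negP => lt.
have [I [sIZ' iI eI]] := rank_wit M Z'.
have [J [sIJ sJZ iJ eJ]] := rank_extend (subset_trans sIZ' sZ) iI.
have [K [sK iK eK]] := rank_wit M (z |: Z).
have lt' : #|J| < #|K| by rewrite eJ eK.
have [y yKJ iyJ] := indep_aug iJ iK lt'.
move: yKJ; rewrite inE => /andP[yJ yK].
have := subsetP sK y yK; rewrite in_setU1 => /orP[/eqP yz|yZ].
  subst y.
  have : #|z |: I| <= rank M (z |: Z').
    apply: rank_ge; first exact: setUS.
    apply: indep_down iyJ; exact: setUS.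
  rewrite eq' -eI cardsU1.
  suff -> : z \notin I by rewrite add1n ltnn.
  by apply: contra yJ; apply: (subsetP sIJ).
have : #|y |: J| <= rank M Z.
  by apply: rank_ge => //; rewrite subUset sub1set yZ.
by rewrite cardsU1 yJ -eJ add1n ltnn.
Qed.

Lemma flat_lt (T : finType) (M : matroid T) (S Z : {set T}) (x : T) :
  flat_in M S Z -> x \in S -> x \notin Z -> rank M Z < rank M S.
Proof.
move=> [sZS fl] xS xZ.
apply: (leq_trans (fl x _)); first by rewrite inE xZ.
by apply: rank_mono; rewrite subUset sub1set xS.
Qed.

Lemma flat_restrict (T : finType) (M : matroid T) (S Z P : {set T}) :
  flat_in M S Z -> P \subset S -> flat_in M P (Z :&: P).
Proof.
move=> [sZS fl] sPS; split; first exact: subsetIr.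
move=> x; rewrite !inE => /andP[xZP xP].
have xZ : x \notin Z by move: xZP; rewrite xP andbT.
have := fl x; rewrite inE xZ (subsetP sPS) // => /(_ isT) lt.
rewrite ltn_neqAle rank_mono ?subsetUr ?andbT //.
apply/negP => /eqP e.
have := rank_closure (z := x) (subsetIl Z P) (esym e).
by move=> e'; move: lt; rewrite e' ltnn.
Qed.

Lemma flat_trans (T : finType) (M : matroid T) (S U Z : {set T}) :
  flat_in M U Z -> flat_in M S U -> flat_in M S Z.
Proof.
move=> [sZU flZ] [sUS flU]; split; first exact: subset_trans sUS.
move=> x; rewrite inE => /andP[xZ xS].
case xU: (x \in U).
  by apply: flZ; rewrite inE xZ xU.
have := flU x; rewrite inE xU xS => /(_ isT) lt.
rewrite ltn_neqAle rank_mono ?subsetUr ?andbT //.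
apply/negP => /eqP e.
have := rank_closure (z := x) sZU (esym e).
by move=> e'; move: lt; rewrite e' ltnn.
Qed.

Lemma flat_self (T : finType) (M : matroid T) (S : {set T}) : flat_in M S S.
Proof. by split => // x; rewrite setDv inE. Qed.

Lemma disjI (T : finType) (A B : {set T}) :
  (forall x, x \in A -> x \in B -> False) -> [disjoint A & B].
Proof.
move=> h; rewrite disjoints_subset; apply/subsetP => x xA; rewrite inE.
by apply/negP => xB; exact: h x xA xB.
Qed.

Definition round_in (T : finType) (M : matroid T) (S : {set T}) : Prop :=
  forall A B : {set T}, A :|: B = S -> rank M A < rank M S -> rank M B < rank M S -> False.

Lemma basis_of_max (T : finType) (M : matroid T) (I : {set T}) :
  indep M I -> #|I| = rank M (ground M) -> basis M I.
Proof.
move=> iI eI; split => // Y iY sIY.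
apply/eqP; rewrite eq_sym eqEcard sIY /= eI.
by apply: rank_ge => //; exact: indep_sub.
Qed.

Lemma basis_card (T : finType) (M : matroid T) (B : {set T}) :
  basis M B -> rank M (ground M) <= #|B|.
Proof.
move=> [iB mB]; rewrite leqNgt; apply/negP => lt.
have [K [sK iK eK]] := rank_wit M (ground M).
have [y yKB iyB] := indep_aug iB iK (ltac:(by rewrite eK)).
move: yKB; rewrite inE => /andP[yB _].
have := mB _ iyB (subsetUr _ _) => e.
by move: yB; rewrite -e setU11.
Qed.

Lemma noncoindep_of_lt (T : finType) (M : matroid T) (A : {set T}) :
  rank M A < rank M (ground M) -> ~ coindep M (ground M :\: A).
Proof.
move=> lt [_ [B [bB dB]]].
have sBA : B \subset A.
  apply/subsetP => x xB; have := disjointFl dB xB.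
  by rewrite inE (subsetP (indep_sub bB.1)) // andbT => /negbFE.
have := rank_ge sBA bB.1; have := basis_card bB => h1 h2.
by move: lt; rewrite ltnNge (leq_trans h1 h2).
Qed.

Lemma exists_cocircuit (T : finType) (M : matroid T) (X : {set T}) :
  X \subset ground M -> ~ coindep M X -> exists C : {set T}, C \subset X /\ cocircuit M C.
Proof.
have [n Hn] := ubnP #|X|; elim: n X Hn => [|n IH] X Hn sX nX.
  by [].
case: (classic (forall Y : {set T}, Y \proper X -> coindep M Y)) => h.
  by exists X; split => //; split.
have [Y hY] := not_all_ex_not _ _ h.
have [pYX nY] := imply_to_and _ _ hY.
have sYX := proper_sub pYX.
have [C [sCY cC]] := IH Y (leq_trans (proper_card pYX) Hn) (subset_trans sYX sX) nY.
by exists C; split => //; exact: subset_trans sYX.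
Qed.

Lemma round_round_in (T : finType) (M : matroid T) :
  round M -> round_in M (ground M).
Proof.
move=> r A B eAB ltA ltB.
have [C [sC cC]] := exists_cocircuit (subsetDl _ _) (noncoindep_of_lt ltA).
have [D [sD cD]] := exists_cocircuit (subsetDl _ _) (noncoindep_of_lt ltB).
apply: (r C D cC cD); apply: disjI => x xC xD.
have := subsetP sC x xC; have := subsetP sD x xD.
by rewrite -eAB !inE; case: (x \in A); case: (x \in B).
Qed.

Lemma round_in_round (T : finType) (M : matroid T) :
  round_in M (ground M) -> round M.
Proof.
move=> r C D cC cD dCD.
have key : forall C, cocircuit M C -> rank M (ground M :\: C) < rank M (ground M).
  move=> C' [sC [nC _]]; rewrite ltn_neqAle rank_mono ?subsetDl ?andbT //.
  apply/negP => /eqP e; apply: nC; split => //.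
  have [I [sI iI eI]] := rank_wit M (ground M :\: C').
  exists I; split; first by apply: basis_of_max => //; rewrite eI.
  apply: disjI => x xC xI; have := subsetP sI x xI; by rewrite inE xC.
apply: (r _ _ _ (key C cC) (key D cD)).
rewrite -setDIr; move/disjoint_setI0: dCD => ->; by rewrite setD0.
Qed.

Definition PGf (F : finFieldType) (T : finType) (M : matroid T)
    (S : {set T}) (n : nat) (f : T -> {vspace 'rV[F]_n}) : Prop :=
    [/\ {in S &, injective f},
        (forall x : T, x \in S -> \dim (f x) = 1%N),
        (forall V : {vspace 'rV[F]_n}, \dim V = 1%N -> exists2 x, x \in S & f x = V) &
        (forall X : {set T}, X \subset S ->
           (indep M X <-> \dim (\sum_(x in X) f x)%VS = #|X|))].

Lemma PG_KL (F : finFieldType) (T : finType) (M : matroid T) (P : {set T}) (n : nat) (f : T -> {vspace 'rV[F]_n})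
  (A I : {set T}) (x : T) :
  PGf M P f -> A \subset P -> I \subset A -> indep M I -> #|I| = rank M A -> x \in A ->
  (f x <= \sum_(y in I) f y)%VS.
Proof.
move=> [finj fdim fsurj find] sAP sIA iI eI xA.
case xI: (x \in I); first by apply: (sumv_sup x).
have niI : ~~ indep M (x |: I).
  apply/negP => h; have := rank_ge (X := A) _ h.
  rewrite subUset sub1set xA sIA => /(_ isT).
  by rewrite cardsU1 xI -eI add1n ltnn.
have sxIP : x |: I \subset P by rewrite subUset sub1set (subsetP sAP) // (subset_trans sIA).
have dI : \dim (\sum_(y in I) f y) = #|I|.
  by apply/(find I) => //; apply: subset_trans sIA sAP.
have dxI : \dim (\sum_(y in x |: I) f y) != #|x |: I|.
  by apply/eqP => /(find _ sxIP) h; move: niI; rewrite h.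
move: dxI; rewrite big_setU1 ?xI //= cardsU1 xI.
set U := (\sum_(y in I) f y)%VS => dxI.
have h1 := dimv_sum_cap (f x) U; rewrite fdim ?(subsetP sAP) // dI in h1.
have h2 := dimv_leqif_eq (capvSl (f x) U); rewrite fdim ?(subsetP sAP) // in h2.
have [h2a h2b] := h2.
case c: (\dim (f x :&: U)) h1 h2a h2b => [|[|c']].
- rewrite addn0 => e; by move: dxI; rewrite e eqxx.
- move=> _ _ /esym /eqP <-; exact: capvSr.
- by [].
Qed.

Lemma dim_rV (F : finFieldType) (n : nat) : \dim (fullv : {vspace 'rV[F]_n}) = n.
Proof. by rewrite dimvf /dim /= mul1n. Qed.

Lemma exists_out (F : finFieldType) (n : nat) (U : {vspace 'rV[F]_n}) :
  \dim U < n -> exists v : 'rV[F]_n, v \notin U.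
Proof.
move=> lt; case: (classic (exists v : 'rV[F]_n, v \notin U)) => // h.
have : (fullv <= U)%VS.
  apply/subvP => v _; case vU: (v \in U) => //; case: h; exists v; by rewrite vU.
move/dimvS; rewrite dim_rV => le; by move: lt; rewrite ltnNge le.
Qed.

Lemma two_out (F : finFieldType) (n : nat) (U W : {vspace 'rV[F]_n}) :
  \dim U < n -> \dim W < n -> exists v : 'rV[F]_n, v \notin U /\ v \notin W.
Proof.
move=> lU lW.
have [w wU] := exists_out lU.
case wW: (w \in W); last by exists w; rewrite wW.
have [u uW] := exists_out lW.
case uU: (u \in U); last by exists u; rewrite uU.
exists (u + w)%R; split.
  by rewrite rpredDl.
by rewrite rpredDr.
Qed.

Lemma PG_span (F : finFieldType) (T : finType) (M : matroid T) (P : {set T}) (n : nat)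
  (f : T -> {vspace 'rV[F]_n}) (A I : {set T}) :
  PGf M P f -> A \subset P -> I \subset A -> indep M I -> #|I| = rank M A ->
  forall v : 'rV[F]_n, (forall x, x \in P -> f x = <[v]>%VS -> x \in A) ->
  v \in (\sum_(y in I) f y)%VS.
Proof.
move=> hPG sAP sIA iI eI v hv.
have [finj fdim fsurj find] := hPG.
case v0: (v == 0%R); first by move/eqP: v0 => ->; exact: mem0v.
have [x xP fx] := fsurj <[v]>%VS (ltac:(by rewrite dim_vline v0)).
have := PG_KL hPG sAP sIA iI eI (hv x xP fx); rewrite fx => /subvP; apply.
exact: memv_line.
Qed.

Lemma PG_rank (F : finFieldType) (T : finType) (M : matroid T) (P : {set T}) (n : nat)
  (f : T -> {vspace 'rV[F]_n}) : PGf M P f -> rank M P = n.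
Proof.
move=> hPG; have [finj fdim fsurj find] := hPG.
have [I [sI iI eI]] := rank_wit M P.
have dI : \dim (\sum_(y in I) f y) = #|I| by apply/(find I sI).
have full : (fullv <= \sum_(y in I) f y)%VS.
  apply/subvP => v _; apply: (PG_span hPG (subxx P) sI iI eI) => //.
have := dimvS full; have := dimvS (subvf (\sum_(y in I) f y)).
rewrite dim_rV dI -eI => h1 h2; apply/eqP; by rewrite eqn_leq h1 h2.
Qed.

Lemma PG_round_in (F : finFieldType) (T : finType) (M : matroid T) (P : {set T}) (n : nat)
  (f : T -> {vspace 'rV[F]_n}) : PGf M P f -> round_in M P.
Proof.
move=> hPG A B eAB ltA ltB; have [finj fdim fsurj find] := hPG.
rewrite (PG_rank hPG) in ltA ltB.
have sAP : A \subset P by rewrite -eAB subsetUl.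
have sBP : B \subset P by rewrite -eAB subsetUr.
have [I [sI iI eI]] := rank_wit M A.
have [J [sJ iJ eJ]] := rank_wit M B.
have dI : \dim (\sum_(y in I) f y) = #|I| by apply/(find I (subset_trans sI sAP)).
have dJ : \dim (\sum_(y in J) f y) = #|J| by apply/(find J (subset_trans sJ sBP)).
have [v [vU vW]] := @two_out F n (\sum_(y in I) f y)%VS (\sum_(y in J) f y)%VS (ltac:(by rewrite dI eI)) (ltac:(by rewrite dJ eJ)).
have v0 : v != 0%R by apply: contra vU => /eqP ->; exact: mem0v.
have [x xP fx] := fsurj <[v]>%VS (ltac:(by rewrite dim_vline v0)).
move: xP; rewrite -eAB inE => /orP[xA|xB].
  have := PG_KL hPG sAP sI iI eI xA; rewrite fx => /subvP/(_ v (memv_line v)).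
  by rewrite (negbTE vU).
have := PG_KL hPG sBP sJ iJ eJ xB; rewrite fx => /subvP/(_ v (memv_line v)).
by rewrite (negbTE vW).
Qed.

Lemma card_bigcup_le (I V : finType) (A : {set I}) (G : I -> {set V}) :
  #|\bigcup_(i in A) G i| <= \sum_(i in A) #|G i|.
Proof.
have [n Hn] := ubnP #|A|; elim: n A Hn => [|n IH] A Hn; first by [].
case: (set_0Vmem A) => [->|[a aA]]; first by rewrite !big_set0 cards0.
rewrite (big_setD1 a aA) (big_setD1 a aA) /= cardsU.
apply: leq_trans (leq_subr _ _) _; rewrite leq_add2l; apply: IH.
by move: Hn; rewrite (cardsD1 a A) aA.
Qed.

Lemma card_bigcup_disj (I V : finType) (A : {set I}) (G : I -> {set V}) :
  (forall i j, i \in A -> j \in A -> i != j -> [disjoint G i & G j]) ->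
  #|\bigcup_(i in A) G i| = \sum_(i in A) #|G i|.
Proof.
have [n Hn] := ubnP #|A|; elim: n A Hn => [|n IH] A Hn hd; first by [].
case: (set_0Vmem A) => [->|[a aA]]; first by rewrite !big_set0 cards0.
rewrite (big_setD1 a aA) (big_setD1 a aA) /= cardsU.
have -> : G a :&: \bigcup_(i in A :\ a) G i = set0.
  apply: disjoint_setI0; apply: disjI => x xa /bigcupP [i].
  rewrite inE => /andP[ia iA] xi.
  have := hd a i aA iA; rewrite eq_sym; move: ia; rewrite inE => -> /(_ isT) d.
  by have := disjointFr d xa; rewrite xi.
rewrite cards0 subn0 IH //.
  by move: Hn; rewrite (cardsD1 a A) aA.
move=> i j; rewrite !inE => /andP[_ iA] /andP[_ jA]; exact: hd.
Qed.

Definition nz (F : finFieldType) (m : nat) (V : {vspace 'rV[F]_m}) : {set 'rV[F]_m} :=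
  [set v | (v \in V) && (v != 0%R)].

Lemma card_nz (F : finFieldType) (m : nat) (V : {vspace 'rV[F]_m}) :
  #|nz V| = (#|F| ^ \dim V).-1.
Proof.
have h : #|V| = #|[set v | v \in V]| by apply: eq_card => v; rewrite inE.
rewrite -card_vspace h (cardsD1 0%R [set v | v \in V]) inE mem0v add1n /=.
by apply: eq_card => v; rewrite !inE andbC.
Qed.

Lemma nz_disj (F : finFieldType) (m : nat) (V W : {vspace 'rV[F]_m}) :
  \dim V = 1 -> \dim W = 1 -> V != W -> [disjoint nz V & nz W].
Proof.
move=> dV dW nVW; apply: disjI => v; rewrite !inE => /andP[vV v0] /andP[vW _].
have e : forall U : {vspace 'rV[F]_m}, \dim U = 1 -> v \in U -> <[v]>%VS = U.
  move=> U dU vU; apply/eqP; have := dimv_leqif_eq vU.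
  by rewrite dU dim_vline v0 => -[_ <-].
by move: nVW; rewrite -(e V dV vV) -(e W dW vW) eqxx.
Qed.

Lemma PG_flat_base (F : finFieldType) (T : finType) (M : matroid T) (S P : {set T})
  (n k : nat) (g : T -> {vspace 'rV[F]_n}) (f : T -> {vspace 'rV[F]_k}) :
  PGf M S g -> PGf M P f -> P \subset S -> flat_in M S P.
Proof.
move=> hS hP sPS; split => // x; rewrite inE => /andP[xP xS].
rewrite ltn_neqAle rank_mono ?subsetUr ?andbT //; apply/negP => /eqP e.
have [ginj gdim gsurj gind] := hS.
have [finj fdim fsurj find] := hP.
have rP := PG_rank hP.
have [I [sI iI eI]] := rank_wit M P.
set U := (\sum_(y in I) g y)%VS.
have dU : \dim U = k by rewrite -rP -eI; apply/(gind I (subset_trans sI sPS)).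
have sxS : x |: P \subset S by rewrite subUset sub1set xS sPS.
have sub : forall y, y \in x |: P -> (g y <= U)%VS.
  move=> y yP; apply: (PG_KL hS sxS _ iI _ yP).
    by apply: subset_trans sI (subsetUr _ _).
  by rewrite eI e.
have q1 : 0 < (#|F|).-1 by rewrite -subn1 subn_gt0 finNzRing_gt1.
have low : #|x |: P| * (#|F|).-1 <= (#|F| ^ k).-1.
  rewrite -sum_nat_const.
  have -> : \sum_(y in x |: P) (#|F|).-1 = \sum_(y in x |: P) #|nz (g y)|.
    apply: eq_bigr => y yP; by rewrite card_nz gdim ?(subsetP sxS) // expn1.
  rewrite -card_bigcup_disj; last first.
    move=> i j iP jP ij; apply: nz_disj; rewrite ?gdim ?(subsetP sxS) //.
    by apply: contra ij => /eqP /ginj -> //; apply: (subsetP sxS).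
  rewrite -dU -card_nz; apply: subset_leq_card; apply/subsetP => v /bigcupP [y yP].
  rewrite !inE => /andP[vy ->]; rewrite andbT; exact: (subvP (sub y yP)).
have up : (#|F| ^ k).-1 <= #|P| * (#|F|).-1.
  rewrite -sum_nat_const.
  have -> : \sum_(y in P) (#|F|).-1 = \sum_(y in P) #|nz (f y)|.
    apply: eq_bigr => y yP; by rewrite card_nz fdim // expn1.
  apply: leq_trans (card_bigcup_le _ _).
  have -> : (#|F| ^ k).-1 = #|nz (fullv : {vspace 'rV[F]_k})| by rewrite card_nz dim_rV.
  apply: subset_leq_card; apply/subsetP => v.
  rewrite inE => /andP[_ v0].
  have [y yP fy] := fsurj <[v]>%VS (ltac:(by rewrite dim_vline v0)).
  apply/bigcupP; exists y => //; by rewrite inE fy memv_line v0.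
move: (leq_trans low up); rewrite cardsU1 xP add1n mulSn.
by rewrite leqNgt -{1}[#|P| * _]add0n ltn_add2r q1.
Qed.

Lemma Mq_flat (F : finFieldType) (T : finType) (M : matroid T) (S : {set T}) :
  inMq F M S -> forall (P : {set T}) (n : nat) (f : T -> {vspace 'rV[F]_n}),
  P \subset S -> PGf M P f -> flat_in M S P.
Proof.
elim => [S0 n0 _ [g hg] | S1 S2 n0 h1 IH1 h2 IH2 hmod [gT hgT] hflat] P n f sP hP.
  exact: PG_flat_base hg hP sP.
have TS1 : flat_in M S1 (S1 :&: S2) := hmod.1.
have TS2 : flat_in M S2 (S1 :&: S2) := IH2 _ _ _ (subsetIr _ _) hgT.
have S1f : flat_in M (S1 :|: S2) S1.
  apply/(hflat S1 (subsetUl _ _)); rewrite setIid; split => //; exact: flat_self.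
have S2f : flat_in M (S1 :|: S2) S2.
  apply/(hflat S2 (subsetUr _ _)); rewrite setIid setIC; split => //; exact: flat_self.
case: (boolP (P \subset S1)) => [sP1|nP1].
  have P1 := IH1 _ _ _ sP1 hP.
  apply/(hflat P sP); rewrite (setIidPl sP1); split => //.
  have -> : P :&: S2 = P :&: (S1 :&: S2) by rewrite setIA (setIidPl sP1).
  apply: flat_trans TS2; exact: flat_restrict P1 (subsetIl _ _).
case: (boolP (P \subset S2)) => [sP2|nP2].
  have P2 := IH2 _ _ _ sP2 hP.
  apply/(hflat P sP); rewrite (setIidPl sP2); split => //.
  have -> : P :&: S1 = P :&: (S1 :&: S2) 
    by rewrite setIA; apply/esym/setIidPl; exact: subset_trans (subsetIl _ _) sP2.
  apply: flat_trans TS1; exact: flat_restrict P2 (subsetIr _ _).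
exfalso.
have [x1 xP1 xS1] := subsetPn nP1.
have [x2 xP2 xS2] := subsetPn nP2.
apply: (PG_round_in hP (A := S1 :&: P) (B := S2 :&: P)).
- by rewrite -setIUl (setIidPr sP).
- by apply: (flat_lt (flat_restrict S1f sP) xP1); rewrite inE (negbTE xS1).
- by apply: (flat_lt (flat_restrict S2f sP) xP2); rewrite inE (negbTE xS2).
Qed.

Lemma Mq_round (F : finFieldType) (T : finType) (M : matroid T) (S : {set T}) :
  inMq F M S -> round_in M S -> exists n, PG_iso F M S n.
Proof.
elim => [S0 n0 _ h | S1 S2 n0 h1 IH1 h2 IH2 hmod [gT hgT] hflat] hr.
  by exists n0.
case: (boolP (S1 \subset S2)) => [s12|n12].
  by rewrite (setUidPr s12) in hr *; apply: IH2.
case: (boolP (S2 \subset S1)) => [s21|n21].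
  by rewrite (setUidPl s21) in hr *; apply: IH1.
exfalso.
have TS1 : flat_in M S1 (S1 :&: S2) := hmod.1.
have TS2 : flat_in M S2 (S1 :&: S2) := Mq_flat h2 (subsetIr _ _) hgT.
have S1f : flat_in M (S1 :|: S2) S1.
  apply/(hflat S1 (subsetUl _ _)); rewrite setIid; split => //; exact: flat_self.
have S2f : flat_in M (S1 :|: S2) S2.
  apply/(hflat S2 (subsetUr _ _)); rewrite setIid setIC; split => //; exact: flat_self.
have [x1 xS2 xS1] := subsetPn n21.
have [x2 xS1' xS2'] := subsetPn n12.
apply: (hr S1 S2 erefl).
- by apply: (flat_lt S1f _ xS1); rewrite inE xS2 orbT.
- by apply: (flat_lt S2f _ xS2'); rewrite inE xS1'.
Qed.

Theorem lemma3p7 (F : finFieldType) (T : finType) (M : matroid T) (r : nat) :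
  inMq F M (ground M) -> rank M (ground M) = r ->
  (round M <-> PG_iso F M (ground M) r).
Proof.
move=> hM hr; split.
  move=> rd; have [n [f hf]] := Mq_round hM (round_round_in rd).
  have e : n = r by rewrite -hr (PG_rank (f := f)).
  by subst n; exists f.
move=> [f hf]; apply: round_in_round; exact: (PG_round_in (f := f)).
Qed.
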